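(* Let $V$, $J$, $\Delta_{\mathbf u,\mathbf v}$, $\phi^+_{\mathbf u}$, $\phi^-_{\mathbf u}$ be as in the context, and say an action $\mathbf u$ is optimal at $\mathbf Q$ if $\mathbf u\in\arg\min_{\mathbf v\in\mathcal U}J(\mathbf Q,\mathbf v)$. Then: (1) Let $\mathbf 0\in\mathcal U$ be the all-zero action and $\mathcal Q_0=\{\mathbf Q\in\mathcal Q: Q_{n,m}\le\phi^+_{\mathbf 0}(\mathbf Q_{-n,-m})\ \forall n\in\mathcal N,\ m\in\mathcal M_n\}$. For every $\mathbf Q\in\mathcal Q_0$, $\Delta_{\mathbf 0,\mathbf v}(\mathbf Q)\le 0$ for all $\mathbf v\in\mathcal U$, so $\mathbf 0$ is optimal at $\mathbf Q$. (2) Let $\mathbf u\in\mathcal U$ with $u_n=m\in\mathcal M_n$ for some $n\in\mathcal N$. Then for every $\mathbf Q\in\mathcal Q$ with $Q_{n,m}\ge\phi^-_{\mathbf u}(\mathbf Q_{-n,-m})$ we have $\Delta_{\mathbf u,\mathbf v}(\mathbf Q)\le0$ for all $\mathbf v\in\mathcal U$, so $\mathbf u$ is optimal at $\mathbf Q$. Moreover, if $u_0=m\in\mathcal M_0$, then $\phi^-_{\mathbf u}(\mathbf Q_{-0,-m})$ is monotonically non-increasing in $Q_{n,m}$ for every $n\in\mathcal N_m$ (all other components held fixed).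
   Context: Model. Let $N\ge 1$, $\mathcal N=\{0,1,\dots,N\}$ (base station $0$ is the macro base station, MBS) and $\mathcal N^+=\{1,\dots,N\}$ (small base stations, SBSs). Let $\mathcal M=\{1,\dots,M\}$ be the set of contents. For each $n\in\mathcal N$ let $\mathcal M_n\subseteq\mathcal M$ be the set of contents cached at BS $n$, with $\mathcal M_0=\mathcal M$; put $\tilde{\mathcal M}_n=\mathcal M_n\cup\{0\}$ and $\mathcal N_m=\{n\in\mathcal N^+: m\in\mathcal M_n\}$. Powers $p(n,m)\ge 0$ are given for $n\in\mathcal N$, $m\in\mathcal M_n$, and $p(n,0)=0$. A weight $w\ge 0$ is fixed. The feasible action space is $\mathcal U=\{\mathbf u=(u_n)_{n\in\mathcal N}: u_n\in\tilde{\mathcal M}_n\ \forall n,\ u_0\sum_{n\in\mathcal N^+}u_n=0\}$. A state is $\mathbf Q=(Q_{n,m})_{n\in\mathcal N,m\in\mathcal M_n}$ with $Q_{n,m}\in\mathcal Q_{n,m}=\{0,1,\dots,N_{n,m}\}$ for given positive integers $N_{n,m}$; $\mathcal Q=\prod_{n\in\mathcal N}\prod_{m\in\mathcal M_n}\mathcal Q_{n,m}$. Arrivals $A_{n,m}$ ($n\in\mathcal N$, $m\in\mathcal M$) are mutually independent nonnegative-integer random variables with fixed distributions, i.i.d. across time slots; $\tilde A_{0,m}=A_{0,m}+\sum_{n\in\mathcal N^+\setminus\mathcal N_m}A_{n,m}$. Given state $\mathbf Q$ and action $\mathbf u$, the next state $\mathbf Q'$ is $Q'_{0,m}=\min\{\mathbf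 1(u_0\neq m)Q_{0,m}+\tilde A_{0,m},N_{0,m}\}$ for $m\in\mathcal M_0$ and $Q'_{n,m}=\min\{\mathbf 1(u_0\neq m\text{ and }u_n\neq m)Q_{n,m}+A_{n,m},N_{n,m}\}$ for $n\in\mathcal N^+$, $m\in\mathcal M_n$; $\mathbb E$ denotes expectation over the arrivals. The per-stage cost is $g(\mathbf Q,\mathbf u)=d(\mathbf Q)+w\,p(\mathbf u)$ with $d(\mathbf Q)=\sum_{n\in\mathcal N}\sum_{m\in\mathcal M_n}Q_{n,m}$ and $p(\mathbf u)=\sum_{n\in\mathcal N}p(n,u_n)$. Value function. Fix a reference state $\mathbf Q^\dagger\in\mathcal Q$. Relative value iteration: $V_0\equiv 0$, $J_{l+1}(\mathbf Q,\mathbf u)=g(\mathbf Q,\mathbf u)+\mathbb E[V_l(\mathbf Q')]$, and $V_{l+1}(\mathbf Q)=\min_{\mathbf u\in\mathcal U}J_{l+1}(\mathbf Q,\mathbf u)-\min_{\mathbf u\in\mathcal U}J_{l+1}(\mathbf Q^\dagger,\mathbf u)$ for $l\ge0$. It is assumed (standing assumption of the paper, guaranteed under its unichain conditions) that $V_l$ converges pointwise to a function $V:\mathcal Q\to\mathbb R$; this $V$ is the value function, which solves the Bellman equation $\theta+V(\mathbf Q)=\min_{\mathbf u\in\mathcal U}\{g(\mathbf Q,\mathbf u)+\mathbb E[V(\mathbf Q')]\}$ for all $\mathbf Q$, and optimal policies choose actions in $\arg\min_{\mathbf u}J(\mathbf Q,\mathbf u)$. Further notation. $J(\mathbf Q,\mathbf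 u)=g(\mathbf Q,\mathbf u)+\mathbb E[V(\mathbf Q')]$ and $\Delta_{\mathbf u,\mathbf v}(\mathbf Q)=J(\mathbf Q,\mathbf u)-J(\mathbf Q,\mathbf v)$. For $(n,m)$ with $m\in\mathcal M_n$, $\mathbf Q_{-n,-m}=(Q_{i,j})_{(i,j)\neq(n,m)}$, and $(Q_{n,m},\mathbf Q_{-n,-m})$ denotes the full state. Define $\Phi_{\mathbf u}(\mathbf Q_{-n,-m})=\{Q_{n,m}\in\mathcal Q_{n,m}: \Delta_{\mathbf u,\mathbf v}(Q_{n,m},\mathbf Q_{-n,-m})\le0\ \forall\mathbf v\in\mathcal U,\ \mathbf v\ne\mathbf u\}$, $\phi^+_{\mathbf u}(\mathbf Q_{-n,-m})=\max\Phi_{\mathbf u}(\mathbf Q_{-n,-m})$ if this set is nonempty and $-\infty$ otherwise, and $\phi^-_{\mathbf u}(\mathbf Q_{-n,-m})=\min\Phi_{\mathbf u}(\mathbf Q_{-n,-m})$ if nonempty and $+\infty$ otherwise. *)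

(* Defs.v *)
From HB Require Import structures.
From mathcomp Require Import all_boot all_order all_algebra.
Set Implicit Arguments. Unset Strict Implicit. Unset Printing Implicit Defensive.
Import Order.TTheory GRing.Theory Num.Theory.
Local Open Scope ring_scope.

(* Data of the model.
   - base stations : 'I_(nBS).+1  (ord0 = MBS, the others = SBSs), nBS = N
   - contents      : 'I_nC        (content index i stands for content i+1), nC = M
   - actions u_n   : option 'I_nC (None = "0" = idle, Some m = serve content m)
   - cache n       : the set M_n
   - cap n m       : N_{n,m}
   - pow n m       : p(n,m)   (p(n,0) = 0 is built in, see [cost])
   - weight        : w
   - parr n m k    : P(A_{n,m} = k), the pmf of the arrival A_{n,m}
   - Qref          : the reference state Q^dagger *)
Record model (R : realFieldType) := Model {
  nBS : nat;
  nC : nat;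
  cache : 'I_nBS.+1 -> {set 'I_nC};
  cap : 'I_nBS.+1 -> 'I_nC -> nat;
  pow : 'I_nBS.+1 -> 'I_nC -> R;
  weight : R;
  parr : 'I_nBS.+1 -> 'I_nC -> nat -> R;
  Qref : {ffun 'I_nBS.+1 * 'I_nC -> nat}
}.

Arguments nBS {R} m.
Arguments nC {R} m.
Arguments cache {R} m _.
Arguments cap {R} m _ _.
Arguments pow {R} m _ _.
Arguments weight {R} m.
Arguments parr {R} m _ _ _.
Arguments Qref {R} m.

Section Model.
Variables (R : realFieldType) (S : model R).

Local Notation BS := ('I_(nBS S).+1).
Local Notation CT := ('I_(nC S)).

(* States: Q_{n,m}; coordinates with m \notin M_n are fixed to 0 (they are
   not part of the state in the paper). *)
Definition state := {ffun BS * CT -> nat}.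
Definition action := {ffun BS -> option CT}.

Definition valid (Q : state) : bool :=
  [forall p : BS * CT,
     if p.2 \in cache S p.1 then (Q p <= cap S p.1 p.2)%N else Q p == 0%N].

Definition feasible (u : action) : bool :=
  [forall n : BS, if u n is Some m then m \in cache S n else true] &&
  ((u ord0 == None) || [forall n : BS, (n != ord0) ==> (u n == None)]).

Definition act0 : action := [ffun => None].

Definition dcost (Q : state) : R :=
  \sum_(p : BS * CT | p.2 \in cache S p.1) (Q p)%:R.
Definition pcost (u : action) : R :=
  \sum_(n : BS) (if u n is Some m then pow S n m else 0).
Definition cost (Q : state) (u : action) : R := dcost Q + weight S * pcost u.

(* The next state only depends on the
   arrivals through min(A_{n,m}, K) where K = max N_{n,m}; we therefore
   compute the expectation exactly via the law of the truncated arrivals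
   min(A_{n,m}, K), whose pmf is [qtr]. *)
Definition Kmax : nat := \max_(p : BS * CT) cap S p.1 p.2.
Definition arr := {ffun BS * CT -> 'I_Kmax.+1}.

Definition qtr (n : BS) (m : CT) (k : 'I_Kmax.+1) : R :=
  if (k < Kmax)%N then parr S n m k
  else 1 - \sum_(j < Kmax) parr S n m j.

Definition Atil0 (a : arr) (m : CT) : nat :=
  (a (ord0, m) + \sum_(n : BS | (n != ord0) && (m \notin cache S n)) a (n, m))%N.

Definition next (Q : state) (u : action) (a : arr) : state :=
  [ffun p : BS * CT =>
     if p.1 == ord0 then
       minn ((if u ord0 != Some p.2 then Q p else 0) + Atil0 a p.2)%N (cap S p.1 p.2)
     else if p.2 \in cache S p.1 then
       minn ((if (u ord0 != Some p.2) && (u p.1 != Some p.2) then Q p else 0)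
             + a p)%N (cap S p.1 p.2)
     else 0%N].

Definition Expect (f : arr -> R) : R :=
  \sum_(a : arr) (\prod_(p : BS * CT) qtr p.1 p.2 (a p)) * f a.

Definition Jfun (V : state -> R) (Q : state) (u : action) : R :=
  cost Q u + Expect (fun a => V (next Q u a)).

(* min over u \in \mathcal U (act0 is always feasible) *)
Definition minU (F : action -> R) : R :=
  \big[Order.min/F act0]_(u | feasible u) F u.

Fixpoint RVI (l : nat) : state -> R :=
  match l with
  | 0 => fun _ => 0
  | l'.+1 => fun Q => minU (Jfun (RVI l') Q) - minU (Jfun (RVI l') (Qref S))
  end.

Definition RVI_converges (V : state -> R) : Prop :=
  forall Q, valid Q -> forall eps : R, 0 < eps ->
    exists L, forall l, (L <= l)%N -> `|RVI l Q - V Q| < eps.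

Definition Delta (V : state -> R) (Q : state) (u v : action) : R :=
  Jfun V Q u - Jfun V Q v.

Definition optimal (V : state -> R) (Q : state) (u : action) : Prop :=
  feasible u /\ forall v, feasible v -> Jfun V Q u <= Jfun V Q v.

Definition setQ (Q : state) (n : BS) (m : CT) (k : nat) : state :=
  [ffun p => if p == (n, m) then k else Q p].

(* Phi_u(Q_{-n,-m}) (depends on Q only through Q_{-n,-m}) *)
Definition PhiSet (V : state -> R) (u : action) (n : BS) (m : CT) (Q : state)
  : seq nat :=
  [seq k <- iota 0 (cap S n m).+1 |
     [forall v : action, (feasible v && (v != u)) ==>
                         (Delta V (setQ Q n m k) u v <= 0)]].

(* phi^+ : None stands for -infinity *)
Definition phi_plus V u n m Q : option nat :=
  if PhiSet V u n m Q is [::] then None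
  else Some (\max_(k <- PhiSet V u n m Q) k)%N.

(* phi^- : None stands for +infinity *)
Definition phi_minus V u n m Q : option nat :=
  if PhiSet V u n m Q is [::] then None
  else Some (\big[minn/cap S n m]_(k <- PhiSet V u n m Q) k)%N.

Definition wf_model : Prop :=
  (0 < nBS S)%N /\
  cache S ord0 = setT /\
  (forall n m, m \in cache S n -> (0 < cap S n m)%N) /\
  (forall n m, m \in cache S n -> 0 <= pow S n m) /\
  0 <= weight S /\
  (forall n m k, 0 <= parr S n m k) /\
  (forall n m (eps : R), 0 < eps -> exists K0, forall K1, (K0 <= K1)%N ->
      `|1 - \sum_(k < K1) parr S n m k| < eps) /\
  valid (Qref S).

End Model.

Definition le_phi_plus (x : nat) (o : option nat) : Prop :=
  if o is Some b then (x <= b)%N else False.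
Definition ge_phi_minus (x : nat) (o : option nat) : Prop :=
  if o is Some b then (b <= x)%N else False.
Definition le_inf (o1 o2 : option nat) : Prop :=
  match o1, o2 with
  | _, None => True
  | None, Some _ => False
  | Some a, Some b => (a <= b)%N
  end.

(* Main.v *)
Require Import Defs.
From HB Require Import structures.
From mathcomp Require Import all_boot all_order all_algebra.
From mathcomp Require Import zify lra.
Import Order.TTheory GRing.Theory Num.Theory.
Local Open Scope ring_scope.

Section Proofs.
Variables (R : realFieldType) (S : model R) (HS : wf_model S).

Notation nxt := (@Defs.next R S).

Lemma qtr_ge0 (n : 'I_(nBS S).+1) m k : 0 <= qtr n m k.
Proof.
have [HN [Hc0 [Hcap [Hpow [Hw [Hpar [Hlim Href]]]]]]] := HS.
rewrite /qtr; case: ifP => _; first exact: Hpar.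
rewrite subr_ge0 leNgt; apply/negP => Hgt.
set s0 := \sum_(j < Kmax S) parr S n m j in Hgt.
have Hd : 0 < s0 - 1 by rewrite subr_gt0.
have [K0 HK] := Hlim n m _ Hd.
have := HK (maxn K0 (Kmax S)) (leq_maxl _ _).
set s1 := \sum_(k < maxn K0 (Kmax S)) parr S n m k.
have Hs : s0 <= s1.
  rewrite /s0 /s1 -!(big_mkord xpredT (fun k => parr S n m k)).
  rewrite [X in _ <= X](big_cat_nat _ (n:=Kmax S)) //=; last by lia.
  rewrite lerDl; apply: sumr_ge0 => i _; exact: Hpar.
have := ler_norm (s1 - 1); rewrite distrC => H1 H2.
clear -Hs H1 H2 Hgt; lra.
Qed.

Lemma dcost_mono (x y : state S) : (forall p, x p <= y p)%N -> dcost x <= dcost y.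
Proof. move=> H; apply: ler_sum => p _; rewrite ler_nat; exact: H. Qed.

Lemma next_mono (x y : state S) u a : (forall p, x p <= y p)%N ->
  forall p, (nxt x u a p <= nxt y u a p)%N.
Proof.
move=> H p; rewrite !ffunE; have := H p.
by do ! case: ifP => _; lia.
Qed.

Lemma Expect_mono (f g : arr S -> R) : (forall a, f a <= g a) -> Expect f <= Expect g.
Proof.
move=> H; apply: ler_sum => a _; apply: ler_wpM2l; last exact: H.
apply: prodr_ge0 => p _; exact: qtr_ge0.
Qed.

Lemma minU_mono (F G : action S -> R) : (forall u, F u <= G u) -> minU F <= minU G.
Proof.
move=> H; rewrite /minU; apply: (big_ind2 (fun x y => x <= y)) => //.
by move=> *; apply: le_min2.
Qed.

Lemma RVI_mono l (x y : state S) : (forall p, x p <= y p)%N -> RVI l x <= RVI l y.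
Proof.
elim: l x y => [|l IH] x y H //=.
rewrite lerD2r; apply: minU_mono => u; rewrite /Jfun /cost.
rewrite lerD // ?lerD2r ?dcost_mono //.
apply: Expect_mono => a; apply: IH; exact: next_mono.
Qed.


Lemma V_mono (V : state S -> R) : RVI_converges V ->
  forall x y : state S, valid x -> valid y -> (forall p, x p <= y p)%N -> V x <= V y.
Proof.
move=> HV x y vx vy H; rewrite leNgt; apply/negP => Hlt.
have Hd : 0 < (V x - V y) / 2 by rewrite divr_gt0 // subr_gt0.
have [L1 H1] := HV x vx _ Hd.
have [L2 H2] := HV y vy _ Hd.
have := H1 (maxn L1 L2) (leq_maxl _ _).
have := H2 (maxn L1 L2) (leq_maxr _ _).
have := RVI_mono (maxn L1 L2) _ _ H.
set a := RVI _ x; set b := RVI _ y => Hab Hb Ha.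
have Hn1 := ler_norm (b - V y).
have Hn3 := ler_norm (V x - a).
rewrite distrC in Hn3.
clear -Hab Hb Ha Hn1 Hn3 Hlt; lra.
Qed.

Lemma next_valid (Q : state S) (u : action S) a : valid (nxt Q u a).
Proof.
have [HN [Hc0 _]] := HS.
apply/forallP => -[i j] /=; rewrite !ffunE /=.
case: (eqVneq i ord0) => [->|Hi].
  by rewrite Hc0 in_setT geq_minr.
by case: (j \in cache S i); rewrite ?geq_minr.
Qed.

Lemma next_setQ_clear (Q : state S) (u : action S) n m k a :
  u ord0 = Some m \/ u n = Some m ->
  nxt (setQ Q n m k) u a = nxt (setQ Q n m 0) u a.
Proof.
move=> Hu; apply/ffunP => -[i j]; rewrite !ffunE /=.
case: (eqVneq (i, j) (n, m)) => [[-> ->]|ne]; last first.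
  by [].
rewrite ?eqxx.
case: ifP => [/eqP Hn|Hn].
  have -> : u ord0 = Some m by case: Hu => //; rewrite Hn.
  by rewrite eqxx.
case: Hu => ->; by rewrite eqxx ?andbF.
Qed.

Lemma Delta_mono (V : state S -> R) : RVI_converges V ->
  forall (Q : state S) (u v : action S) n m k1 k2,
  u ord0 = Some m \/ u n = Some m -> (k1 <= k2)%N ->
  Delta V (setQ Q n m k2) u v <= Delta V (setQ Q n m k1) u v.
Proof.
move=> HV Q u v n m k1 k2 Hu Hk.
have E : forall k, Expect (fun a => V (nxt (setQ Q n m k) u a)) =
                    Expect (fun a => V (nxt (setQ Q n m 0) u a)).
  by move=> k; rewrite /Expect; apply: eq_bigr => a _; rewrite next_setQ_clear.
have Hv : Expect (fun a => V (nxt (setQ Q n m k1) v a)) <=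
          Expect (fun a => V (nxt (setQ Q n m k2) v a)).
  apply: Expect_mono => a; apply: (V_mono _ HV); try exact: next_valid.
  apply: next_mono => p; rewrite !ffunE; case: ifP => //.
rewrite /Delta /Jfun /cost !E.
clear E; lra.
Qed.


Lemma max_in (s : seq nat) : s != [::] -> (\max_(k <- s) k \in s)%N.
Proof.
elim: s => // x [|y t] IH _.
  by rewrite big_cons big_nil maxn0 mem_seq1.
rewrite big_cons; move: (IH isT); move: (\max_(k <- y :: t) k)%N => b Hb.
case: (leqP b x) => H.
  by rewrite mem_head.
by rewrite in_cons Hb orbT.
Qed.

Lemma minc_in c (s : seq nat) : s != [::] -> all (fun k => k <= c)%N s ->
  (\big[minn/c]_(k <- s) k \in s)%N.
Proof.
elim: s => // x [|y t] IH _ /andP [Hx Ha].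
  by rewrite big_cons big_nil (minn_idPl Hx) mem_seq1.
rewrite big_cons; move: (IH isT Ha); move: (\big[minn/c]_(k <- y :: t) k)%N => b Hb.
case: (leqP x b) => H.
  by rewrite mem_head.
by rewrite in_cons Hb orbT.
Qed.

Lemma minc_le c (s : seq nat) x : x \in s -> (\big[minn/c]_(k <- s) k <= x)%N.
Proof.
elim: s => // y t IH; rewrite in_cons big_cons => /orP [/eqP ->|Hx].
  exact: geq_minl.
exact: leq_trans (geq_minr _ _) (IH Hx).
Qed.

Lemma PhiSet_le V (u : action S) n m Q k : k \in PhiSet V u n m Q -> (k <= cap S n m)%N.
Proof. by rewrite mem_filter mem_iota add0n ltnS => /andP [_ /andP [_ ->]]. Qed.

Lemma PhiSet_prop V (u : action S) n m Q k : k \in PhiSet V u n m Q ->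
  forall v, feasible v -> Delta V (setQ Q n m k) u v <= 0.
Proof.
rewrite mem_filter => /andP [/forallP H _] v Hv.
case: (eqVneq v u) => [->|Hne]; first by rewrite /Delta subrr.
by have := H v; rewrite Hv Hne => /implyP; apply.
Qed.

Lemma setQ_id (Q : state S) n m : setQ Q n m (Q (n, m)) = Q.
Proof. by apply/ffunP => p; rewrite ffunE; case: eqP => [->|]. Qed.

Lemma setQ_comm (Q : state S) n m n' m' a b : (n, m) != (n', m') ->
  setQ (setQ Q n m a) n' m' b = setQ (setQ Q n' m' b) n m a.
Proof.
move=> Hne; apply/ffunP => p; rewrite !ffunE.
case: (eqVneq p (n', m')) => [->|]; first by rewrite eq_sym (negbTE Hne).
by case: (p == (n, m)).
Qed.

Lemma opt_from V Q (u : action S) : feasible u ->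
  (forall v, feasible v -> Delta V Q u v <= 0) -> optimal V Q u.
Proof. by move=> Hu H; split => // v Hv; rewrite -subr_le0; apply: H. Qed.

End Proofs.

Arguments PhiSet_prop [R S V u n m Q k].
Arguments Delta_mono [R S] HS [V] HV Q u v [n m k1 k2].
Arguments PhiSet_le [R S V u n m Q k].
Arguments setQ_id [R S].
Arguments setQ_comm [R S Q n m n' m' a b].
Arguments opt_from [R S V Q u].

Theorem theorem1 (R : realFieldType) (S : model R) (HS : wf_model S)
  (V : state S -> R) (HV : RVI_converges V) :
  (* (1) *)
  (forall Q : state S, valid Q ->
     (forall n m, m \in cache S n ->
        le_phi_plus (Q (n, m)) (phi_plus V (act0 S) n m Q)) ->
     (forall v, feasible v -> Delta V Q (act0 S) v <= 0) /\ optimal V Q (act0 S))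
  /\
  (* (2), first claim *)
  (forall (u : action S) n m, feasible u -> u n = Some m ->
     forall Q : state S, valid Q ->
       ge_phi_minus (Q (n, m)) (phi_minus V u n m Q) ->
       (forall v, feasible v -> Delta V Q u v <= 0) /\ optimal V Q u)
  /\
  (* (2), monotonicity of phi^-_u(Q_{-0,-m}) in Q_{n',m}, n' \in N_m *)
  (forall (u : action S) m, feasible u -> u ord0 = Some m ->
     forall Q : state S, valid Q ->
     forall n', n' != ord0 -> m \in cache S n' ->
     forall k1 k2, (k1 <= k2 <= cap S n' m)%N ->
       le_inf (phi_minus V u ord0 m (setQ Q n' m k2))
              (phi_minus V u ord0 m (setQ Q n' m k1))).
Proof.
have Hf0 : feasible (act0 S).
  apply/andP; split; last by rewrite ffunE.
  by apply/forallP => n; rewrite ffunE.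
split; [|split].
- move=> Q _ Hphi.
  suff H : forall v, feasible v -> Delta V Q (act0 S) v <= 0.
    by split => //; apply: opt_from.
  move=> v Hv.
  case: (pickP (fun n => v n != None)) => [n Hn|H0]; last first.
    have -> : v = act0 S.
      by apply/ffunP => n; rewrite ffunE; have := H0 n; case: (v n).
    by rewrite /Delta subrr.
  case E: (v n) Hn => [m|] // _.
  have Hm : m \in cache S n.
    by move/andP: Hv => [/forallP Hf _]; have := Hf n; rewrite E.
  have := Hphi n m Hm; rewrite /phi_plus.
  case E2: (PhiSet V (act0 S) n m Q) => [|x s] //= Hle.
  have Hin : (\max_(k <- x :: s) k)%N \in PhiSet V (act0 S) n m Q.
    by rewrite E2; apply: max_in.
  have H1 := PhiSet_prop Hin _ Hv.
  have H2 := Delta_mono HS HV Q v (act0 S) (or_intror E) Hle.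
  rewrite setQ_id in H2.
  move: H1 H2; rewrite /Delta => H1 H2; lra.
- move=> u n m Hu Hun Q _.
  rewrite /phi_minus.
  case E2: (PhiSet V u n m Q) => [|x s] //= Hge.
  suff H : forall v, feasible v -> Delta V Q u v <= 0.
    by split => //; apply: opt_from.
  move=> v Hv.
  have Hin : (\big[minn/cap S n m]_(k <- x :: s) k)%N \in PhiSet V u n m Q.
    rewrite E2; apply: minc_in => //.
    by apply/allP => k Hk; apply: (PhiSet_le (V:=V) (u:=u) (Q:=Q)); rewrite E2.
  have H1 := PhiSet_prop Hin _ Hv.
  have H2 := Delta_mono HS HV Q u v (or_intror Hun) Hge.
  rewrite setQ_id in H2.
  exact: le_trans H2 H1.
- move=> u m Hu Hu0 Q _ n' Hn' _ k1 k2 /andP [Hk _].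
  have Hsub : forall k0, k0 \in PhiSet V u ord0 m (setQ Q n' m k1) ->
                         k0 \in PhiSet V u ord0 m (setQ Q n' m k2).
    move=> k0 Hk0.
    rewrite mem_filter; apply/andP; split; last first.
      by rewrite mem_iota add0n ltnS; apply: PhiSet_le Hk0.
    apply/forallP => v; apply/implyP => /andP [Hv _].
    have H1 := PhiSet_prop Hk0 _ Hv.
    have Hne : (n', m) != (ord0, m).
      by apply/negP => /eqP [] /eqP; rewrite (negbTE Hn').
    rewrite setQ_comm // in H1 *.
    rewrite (setQ_comm Hne).
    exact: le_trans (Delta_mono HS HV _ u v (or_introl Hu0) Hk) H1.
  rewrite /phi_minus.
  case E1: (PhiSet V u ord0 m (setQ Q n' m k1)) => [|x s];
    first by case: (PhiSet V u ord0 m (setQ Q n' m k2)).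
  set b := (\big[minn/cap S ord0 m]_(k <- x :: s) k)%N.
  have Hb : b \in PhiSet V u ord0 m (setQ Q n' m k1).
    rewrite E1; apply: minc_in => //.
    by apply/allP => k Hk'; apply: (PhiSet_le (V:=V) (u:=u) (Q:=setQ Q n' m k1)); rewrite E1 in Hk' *.
  have Hb2 := Hsub _ Hb.
  case E2: (PhiSet V u ord0 m (setQ Q n' m k2)) Hb2 => [|y t]; first by [].
  by move=> Hb2 /=; apply: minc_le.
Qed.
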